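(* Let $X$ be a set, $T:\mathcal P(X)\to\mathcal P(X)$ an order reversing quasi involution, and $X_0=\{x\in X: x\in T(\{x\})\}$. If $K\subseteq X$ satisfies $K=TK$, then $K\subseteq X_0$.
   Context: $\mathcal P(X)$ denotes the power set of $X$. A map $T:\mathcal P(X)\to\mathcal P(X)$ is an order reversing quasi involution if for all $K,L\subseteq X$: (i) $K\subseteq TTK$, and (ii) $L\subseteq K$ implies $TK\subseteq TL$. *)

(* Defs.v *)
Definition subset {X : Type} (K L : X -> Prop) : Prop := forall x, K x -> L x.

Definition set_eq {X : Type} (K L : X -> Prop) : Prop := subset K L /\ subset L K.

Definition singleton {X : Type} (x : X) : X -> Prop := fun y => y = x.

Definition order_reversing_quasi_involution {X : Type}
  (T : (X -> Prop) -> (X -> Prop)) : Prop :=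
  (forall K, subset K (T (T K))) /\
  (forall K L, subset L K -> subset (T K) (T L)).

Definition X0 {X : Type} (T : (X -> Prop) -> (X -> Prop)) : X -> Prop :=
  fun x => T (singleton x) x.

(* Main.v *)
Require Import Defs.

Theorem lemma6p1 (X : Type) (T : (X -> Prop) -> (X -> Prop))
  (HT : order_reversing_quasi_involution T) (K : X -> Prop)
  (HK : set_eq K (T K)) : subset K (X0 T).
Proof.
  destruct HT as [_ Hrev]. destruct HK as [HK1 _].
  intros x Hx. unfold X0.
  apply (Hrev K (singleton x)).
  - intros y Hy. unfold singleton in Hy. subst. exact Hx.
  - apply HK1. exact Hx.
Qed.
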